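(* Let $\phi=(\phi_g,X_g,X)_{g\in G}$ be a partial action of a group $G$ on a set $X$ and let $H$ be a normal subgroup of $G$. Then there is an induced partial action $\overline{\phi}$ of $G/H$ on $X$ (with $X_{gH}=\bigcup_{k\in gH}X_k$ and $\overline{\phi}_{gH}(x)=\phi_k(x)$ for $k\in gH$, $x\in X_{k^{-1}}$) if and only if for every $h\in H$, $X_h=X_{h^{-1}}$ and $\phi_h=\operatorname{id}$.
   Context: A partial action of a group $G$ (identity $\varepsilon$) on a set $X$ is $\phi=(\phi_g,X_g,X)_{g\in G}$ with $X_g\subseteq X$ and bijections $\phi_g:X_{g^{-1}}\to X_g$ such that (i) $X_\varepsilon=X$ and $\phi_\varepsilon=\operatorname{id}_X$; (ii) $\phi_g(X_{g^{-1}}\cap X_h)=X_g\cap X_{gh}$ for all $g,h$; (iii) $\phi_g(\phi_h(x))=\phi_{gh}(x)$ for all $g,h$ and $x\in X_{h^{-1}}\cap X_{h^{-1}g^{-1}}$. *)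

(* Defs.v *)
Record group := Group {
  gcar :> Type;
  gmul : gcar -> gcar -> gcar;
  ginv : gcar -> gcar;
  gone : gcar;
  gmulA : forall a b c, gmul a (gmul b c) = gmul (gmul a b) c;
  gmul1g : forall a, gmul gone a = a;
  gmulVg : forall a, gmul (ginv a) a = gone
}.

Arguments gmul {g} _ _.
Arguments ginv {g} _.
Arguments gone {g}.

(* Partial action phi = (phi_g, X_g, X)_{g in G}: X_g is the predicate D g on X,
   phi_g is phi g (only meaningful on D (g^-1)). *)
Definition is_partial_action (G : group) (X : Type)
    (D : G -> X -> Prop) (phi : G -> X -> X) : Prop :=
  (forall x, D gone x) /\ (forall x, phi gone x = x) /\
  (forall g x, D (ginv g) x -> D g (phi g x)) /\
  (forall g x y, D (ginv g) x -> D (ginv g) y -> phi g x = phi g y -> x = y) /\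
  (forall g y, D g y -> exists x, D (ginv g) x /\ phi g x = y) /\
  (forall g h y,
      (exists x, D (ginv g) x /\ D h x /\ phi g x = y) <-> (D g y /\ D (gmul g h) y)) /\
  (forall g h x, D (ginv h) x -> D (gmul (ginv h) (ginv g)) x ->
      phi g (phi h x) = phi (gmul g h) x).

Definition normal_subgroup (G : group) (H : G -> Prop) : Prop :=
  H gone /\
  (forall a b, H a -> H b -> H (gmul a b)) /\
  (forall a, H a -> H (ginv a)) /\
  (forall g a, H a -> H (gmul (gmul g a) (ginv g))).

Definition is_quotient (G : group) (H : G -> Prop) (Q : group) (pi : G -> Q) : Prop :=
  (forall a b, pi (gmul a b) = gmul (pi a) (pi b)) /\
  (forall q : Q, exists g, pi g = q) /\
  (forall g, pi g = gone <-> H g).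

(* Main.v *)
Require Import Defs.
From Stdlib Require Import ClassicalEpsilon.

Lemma mulgV (G : group) (a : G) : gmul a (ginv a) = gone.
Proof.
  assert (E : gmul (gmul a (ginv a)) (gmul a (ginv a)) = gmul a (ginv a)).
  { rewrite <- gmulA, (gmulA _ (ginv a) a), gmulVg, gmul1g. reflexivity. }
  rewrite <- (gmulVg G (gmul a (ginv a))). rewrite <- E at 3.
  rewrite gmulA, gmulVg, gmul1g. reflexivity.
Qed.

Lemma mulg1 (G : group) (a : G) : gmul a gone = a.
Proof. rewrite <- (gmulVg G a), gmulA, mulgV. apply gmul1g. Qed.

Lemma mulKg (G : group) (a b : G) : gmul (ginv a) (gmul a b) = b.
Proof. rewrite gmulA, gmulVg. apply gmul1g. Qed.

Lemma mulVKg (G : group) (a b : G) : gmul a (gmul (ginv a) b) = b.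
Proof. rewrite gmulA, mulgV. apply gmul1g. Qed.

Lemma invgK (G : group) (a : G) : ginv (ginv a) = a.
Proof.
  rewrite <- (mulg1 G (ginv (ginv a))), <- (gmulVg G a), gmulA, gmulVg. apply gmul1g.
Qed.

Lemma invMg (G : group) (a b : G) : ginv (gmul a b) = gmul (ginv b) (ginv a).
Proof.
  rewrite <- (gmul1g G (gmul (ginv b) (ginv a))), <- (gmulVg G (gmul a b)), <- gmulA.
  rewrite <- (gmulA _ a b), (mulVKg G b), mulgV, mulg1. reflexivity.
Qed.

Lemma invg1 (G : group) : ginv (@gone G) = gone.
Proof. rewrite <- (gmul1g G (ginv gone)). apply mulgV. Qed.

Lemma hom1 (G Q : group) (pi : G -> Q) :
  (forall a b, pi (gmul a b) = gmul (pi a) (pi b)) -> pi gone = gone.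
Proof.
  intro Hm. pose proof (Hm gone gone) as E. rewrite gmul1g in E.
  rewrite <- (mulKg Q (pi gone) (pi gone)), <- E. apply gmulVg.
Qed.

Lemma homV (G Q : group) (pi : G -> Q) :
  (forall a b, pi (gmul a b) = gmul (pi a) (pi b)) -> forall a, pi (ginv a) = ginv (pi a).
Proof.
  intros Hm a. rewrite <- (mulg1 Q (pi (ginv a))).
  rewrite <- (mulgV Q (pi a)), gmulA, <- Hm, gmulVg, (hom1 G Q pi Hm). apply gmul1g.
Qed.

Lemma pa_cancel (G : group) (X : Type) (D : G -> X -> Prop) (phi : G -> X -> X) :
  is_partial_action G X D phi ->
  forall g x, D (ginv g) x -> phi (ginv g) (phi g x) = x.
Proof.
  intros (P1 & P2 & P3 & P4 & P5 & P6 & P7) g x Hx.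
  rewrite P7. rewrite gmulVg. apply P2. exact Hx.
  rewrite invgK, gmulVg. apply P1.
Qed.

Lemma pa_cancel' (G : group) (X : Type) (D : G -> X -> Prop) (phi : G -> X -> X) :
  is_partial_action G X D phi ->
  forall g x, D g x -> phi g (phi (ginv g) x) = x.
Proof.
  intros PA g x Hx. rewrite <- (invgK G g) at 1. apply (pa_cancel G X D phi PA).
  rewrite invgK. exact Hx.
Qed.

Lemma WD (G : group) (X : Type) (D : G -> X -> Prop) (phi : G -> X -> X)
    (H : G -> Prop) (Q : group) (pi : G -> Q) :
  is_partial_action G X D phi ->
  normal_subgroup G H ->
  is_quotient G H Q pi ->
  (forall h : G, H h ->
      (forall x, D h x <-> D (ginv h) x) /\ (forall x, D h x -> phi h x = x)) ->
  forall k k' x, pi k = pi k' -> D (ginv k) x -> D (ginv k') x -> phi k x = phi k' x.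
Proof.
  intros PA NS QU Hyp k k' x Epi Dk Dk'.
  destruct PA as (P1 & P2 & P3 & P4 & P5 & P6 & P7).
  destruct NS as (N1 & N2 & N3 & N4).
  destruct QU as (Q1 & Q2 & Q3).
  assert (Hv : H (gmul k (ginv k'))).
  { apply Q3. rewrite Q1, (homV G Q pi Q1), Epi. apply mulgV. }
  destruct (proj2 (P6 (ginv k) (gmul k (ginv k')) x)) as (z & Dz1 & Dz2 & Ez).
  { split. exact Dk. rewrite mulKg. exact Dk'. }
  assert (Dz3 : D (gmul (gmul k (ginv k')) k) z).
  { destruct (proj1 (P6 (gmul k (ginv k')) k z)) as [_ R]; [|exact R].
    exists z. split. apply (proj1 (Hyp _ Hv)). exact Dz2.
    split. rewrite invgK in Dz1. exact Dz1.
    apply (proj2 (Hyp _ Hv)). exact Dz2. }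
  assert (Du : D (gmul (ginv k') k) x).
  { destruct (proj1 (P6 (ginv k) (gmul (gmul k (ginv k')) k) x)) as [_ R].
    exists z. split. exact Dz1. split. exact Dz3. exact Ez.
    rewrite <- gmulA, mulKg in R. exact R. }
  assert (Hu : H (ginv (gmul (ginv k') k))).
  { apply N3. apply Q3. rewrite Q1, (homV G Q pi Q1), Epi. apply gmulVg. }
  pose proof (P7 k (ginv (gmul (ginv k') k)) x) as E.
  rewrite invgK in E. rewrite <- gmulA, mulgV, mulg1 in E.
  specialize (E Du Dk').
  rewrite (proj2 (Hyp _ Hu)) in E.
  - rewrite E. rewrite invMg, invgK, mulVKg. reflexivity.
  - apply (proj1 (Hyp _ Hu)). rewrite invgK. exact Du.
Qed.

Definition mkpsi (G : group) (X : Type) (D : G -> X -> Prop) (phi : G -> X -> X)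
    (Q : group) (pi : G -> Q) (q : Q) (x : X) : X :=
  match excluded_middle_informative (exists k, pi k = q /\ D (ginv k) x) with
  | left e => phi (proj1_sig (constructive_indefinite_description _ e)) x
  | right _ => x
  end.

Lemma mkpsi_spec (G : group) (X : Type) (D : G -> X -> Prop) (phi : G -> X -> X)
    (H : G -> Prop) (Q : group) (pi : G -> Q) :
  is_partial_action G X D phi ->
  normal_subgroup G H ->
  is_quotient G H Q pi ->
  (forall h : G, H h ->
      (forall x, D h x <-> D (ginv h) x) /\ (forall x, D h x -> phi h x = x)) ->
  forall k x, D (ginv k) x -> mkpsi G X D phi Q pi (pi k) x = phi k x.
Proof.
  intros PA NS QU Hyp k x Dk. unfold mkpsi.
  destruct excluded_middle_informative as [e|n].
  - destruct (constructive_indefinite_description _ e) as [k' [E1 E2]]. simpl.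
    apply (WD G X D phi H Q pi PA NS QU Hyp); auto.
  - exfalso. apply n. exists k. auto.
Qed.

Theorem mainTheorem3 (G : group) (X : Type) (D : G -> X -> Prop) (phi : G -> X -> X)
    (H : G -> Prop) (Q : group) (pi : G -> Q) :
  is_partial_action G X D phi ->
  normal_subgroup G H ->
  is_quotient G H Q pi ->
  ((exists psi : Q -> X -> X,
      is_partial_action Q X (fun (q : Q) (x : X) => exists k : G, pi k = q /\ D k x) psi /\
      (forall (k : G) (x : X), D (ginv k) x -> psi (pi k) x = phi k x))
   <->
   (forall h : G, H h ->
      (forall x, D h x <-> D (ginv h) x) /\ (forall x, D h x -> phi h x = x))).
Proof.
  intros PA NS QU.
  pose proof PA as PA'.
  destruct PA' as (P1 & P2 & P3 & P4 & P5 & P6 & P7).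
  pose proof NS as NS'. destruct NS' as (N1 & N2 & N3 & N4).
  pose proof QU as QU'. destruct QU' as (Q1 & Q2 & Q3).
  pose proof (homV G Q pi Q1) as piV.
  pose proof (hom1 G Q pi Q1) as pi1.
  split.
  - intros (psi & (R1 & R2 & R3 & R4 & R5 & R6 & R7) & Comp).
    assert (Fix : forall h x, H h -> D (ginv h) x -> phi h x = x).
    { intros h x Hh Dx. rewrite <- (Comp h x Dx), (proj2 (Q3 h) Hh). apply R2. }
    assert (Sub : forall h x, H h -> D (ginv h) x -> D h x).
    { intros h x Hh Dx. rewrite <- (Fix h x Hh Dx). apply P3. exact Dx. }
    assert (Iff : forall h x, H h -> (D h x <-> D (ginv h) x)).
    { intros h x Hh. split; intro Dx.
      - apply (Sub (ginv h) x (N3 h Hh)). rewrite invgK. exact Dx.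
      - apply (Sub h x Hh Dx). }
    intros h Hh. split.
    + intro x. apply Iff. exact Hh.
    + intros x Dx. apply (Fix h x Hh). apply (Iff h x Hh). exact Dx.
  - intro Hyp.
    pose (psi := mkpsi G X D phi Q pi).
    assert (Sp : forall k x, D (ginv k) x -> psi (pi k) x = phi k x).
    { apply (mkpsi_spec G X D phi H Q pi PA NS QU Hyp). }
    assert (WDk := WD G X D phi H Q pi PA NS QU Hyp).
    exists psi. split; [|exact Sp].
    assert (Inv : forall q x, (exists k, pi k = ginv q /\ D k x) ->
               exists g, pi g = q /\ D (ginv g) x).
    { intros q x (k & E & Dx). exists (ginv k). split.
      - rewrite piV, E. apply invgK.
      - rewrite invgK. exact Dx. }
    unfold is_partial_action.
    split; [|split; [|split; [|split; [|split; [|split]]]]].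
    + intro x. exists gone. auto.
    + intro x. rewrite <- pi1. rewrite Sp. apply P2.
      rewrite invg1. apply P1.
    + intros q x Hx. destruct (Inv q x Hx) as (g & E & Dx). subst q.
      exists g. split. reflexivity. rewrite Sp by exact Dx. apply P3. exact Dx.
    + intros q x y Hx Hy Exy.
      destruct (Inv q x Hx) as (g1 & E1 & Dx). destruct (Inv q y Hy) as (g2 & E2 & Dy).
      subst q. rewrite Sp in Exy by exact Dx. rewrite <- E2 in Exy.
      rewrite Sp in Exy by exact Dy.
      rewrite <- (pa_cancel G X D phi PA g1 x Dx).
      rewrite <- (pa_cancel G X D phi PA g2 y Dy).
      rewrite Exy. apply WDk.
      * rewrite !piV, E2. reflexivity.
      * rewrite invgK, <- Exy. apply P3. exact Dx.
      * rewrite invgK. apply P3. exact Dy.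
    + intros q y (k & E & Dy). subst q. exists (phi (ginv k) y). split.
      * exists (ginv k). split. apply piV. apply P3. rewrite invgK. exact Dy.
      * rewrite Sp. apply (pa_cancel' G X D phi PA). exact Dy.
        apply P3. rewrite invgK. exact Dy.
    + intros q r y. split.
      * intros (x & Hx & (k2 & E2 & Dx2) & Ey).
        destruct (Inv q x Hx) as (g & E & Dx). subst q r.
        rewrite Sp in Ey by exact Dx.
        destruct (proj1 (P6 g k2 y)) as [A B].
        { exists x. auto. }
        split. exists g. auto. exists (gmul g k2). split. apply Q1. exact B.
      * intros [(k1 & E1 & Dy1) (k2 & E2 & Dy2)]. subst q.
        destruct (proj2 (P6 k1 (gmul (ginv k1) k2) y)) as (x & Dx1 & Dx2 & Ex).
        { split. exact Dy1. rewrite mulVKg. exact Dy2. }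
        exists x. split; [|split].
        -- exists (ginv k1). split. apply piV. exact Dx1.
        -- exists (gmul (ginv k1) k2). split; [|exact Dx2].
           rewrite Q1, E2, piV, mulKg. reflexivity.
        -- rewrite Sp by exact Dx1. exact Ex.
    + intros q r x Hx Hx2.
      destruct (Inv r x Hx) as (h & Eh & Dxh). subst r.
      destruct Hx2 as (k3 & E3 & D3).
      set (g := gmul (ginv k3) (ginv h)).
      assert (Eg : ginv g = gmul h k3).
      { unfold g. rewrite invMg, !invgK. reflexivity. }
      assert (Pg : pi g = q).
      { unfold g. rewrite Q1, !piV, E3, invMg, !invgK, <- gmulA, mulgV, mulg1.
        reflexivity. }
      rewrite <- Pg. rewrite (Sp h x Dxh).
      assert (Dy : D (ginv g) (phi h x)).
      { rewrite Eg. destruct (proj1 (P6 h k3 (phi h x))) as [_ B].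
        exists x. auto. exact B. }
      rewrite Sp by exact Dy.
      rewrite <- Q1. rewrite Sp.
      * apply P7. exact Dxh. rewrite Eg, mulKg. exact D3.
      * rewrite invMg, Eg, mulKg. exact D3.
Qed.
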